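(* Let $K$ be a positive integer, let $T>0$, and set $\omega_0 = \frac{2\pi}{T}$. Let $N$ be an integer and let $0\leq t_1<t_2<\cdots<t_N < T$. Define the $(N-1)\times 2K$ complex matrix $\mathbf{B}$ whose columns are indexed by $k\in\{-K,\dots,-1,1,\dots,K\}$ and whose rows are indexed by $n\in\{1,\dots,N-1\}$, with entries $$\mathbf{B}_{n,k} = e^{jk\omega_0 t_{n+1}} - e^{jk\omega_0 t_{n}} .$$ Then $\mathbf{B}$ is left-invertible (i.e., has full column rank) provided that $N \geq 2K+2$.
   Context: Here $j$ denotes the imaginary unit. *)

(* Defs.v *)
From HB Require Import structures.
From mathcomp Require Import all_boot all_order all_algebra.
From mathcomp Require Import reals trigo.
From mathcomp Require Import complex.
Set Implicit Arguments. Unset Strict Implicit. Unset Printing Implicit Defensive.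
Import Order.TTheory GRing.Theory Num.Theory.
Local Open Scope ring_scope.

Definition expj {R : realType} (x : R) : R[i] := Complex (cos x) (sin x).

(* Column index i : 'I_(2K) encodes the frequency k in {-K,...,-1,1,...,K}:
   i = 0,...,K-1  |->  k = i - K   (i.e. -K,...,-1)
   i = K,...,2K-1 |->  k = i - K + 1 (i.e. 1,...,K). *)
Definition freq_index (K : nat) (i : 'I_(2 * K)) : int :=
  if (i < K)%N then (i%:Z - K%:Z) else (i%:Z - K%:Z + 1).

(* The (N-1) x 2K matrix B with B_{n,k} = e^{j k w0 t_{n+1}} - e^{j k w0 t_n},
   rows n = 1..N-1 encoded as 0-based n' = n-1 : 'I_(N.-1),
   times t_1..t_N encoded 0-based as t 0, ..., t (N-1), with t : nat -> R
   (values of t at indices >= N are irrelevant). *)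
Definition Bmat {R : realType} (K N : nat) (T : R) (t : nat -> R)
  : 'M[R[i]]_(N.-1, 2 * K) :=
  \matrix_(n < N.-1, c < 2 * K)
    (expj ((freq_index c)%:~R * (2 * pi / T) * t n.+1)
     - expj ((freq_index c)%:~R * (2 * pi / T) * t n)).

(* Main.v *)
Require Import Defs.
From HB Require Import structures.
From mathcomp Require Import all_boot all_order all_algebra.
From mathcomp Require Import reals trigo.
From mathcomp Require Import complex.
From mathcomp Require Import zify lra.
Import Order.TTheory GRing.Theory Num.Theory.
Local Open Scope ring_scope.

Lemma expjD (R : realType) (x y : R) : expj (x + y) = expj x * expj y.
Proof. by rewrite /expj cosD sinD /= [RHS]/GRing.mul /= (addrC (sin x * _)). Qed.

Lemma expj0 (R : realType) : expj (0 : R) = 1.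
Proof. by rewrite /expj cos0 sin0. Qed.

Lemma expjMn (R : realType) (n : nat) (x : R) : expj (n%:R * x) = expj x ^+ n.
Proof.
elim: n => [|n IH]; first by rewrite mul0r expj0 expr0.
by rewrite mulrS mulrDl mul1r expjD IH exprS.
Qed.

Lemma expj_neq0 (R : realType) (x : R) : expj x != 0.
Proof.
apply/negP => /eqP H.
have : (cos x = 0) /\ (sin x = 0) by move: H; rewrite /expj => -[-> ->].
move=> [hc hs]; have := cos2Dsin2 x; rewrite hc hs expr0n /= add0r => /eqP.
by rewrite eq_sym oner_eq0.
Qed.

Lemma expj_inj (R : realType) (x y : R) : 0 <= x -> x < y -> y < pi *+ 2 ->
  expj x != expj y.
Proof.
move=> hx hxy hy; apply/negP => /eqP H.
have e : y = x + (y - x) by rewrite addrC subrK.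
move: H; rewrite e expjD => /eqP; rewrite -subr_eq0 -[X in X - _]mulr1 -mulrBr.
rewrite mulf_eq0 (negbTE (@expj_neq0 R x)) /= subr_eq0 => /eqP.
set d := y - x => hd.
have hc : cos d = 1 by move: hd; rewrite /expj => -[].
have dpos : 0 < d by rewrite subr_gt0.
have dlt : d < pi *+ 2 by rewrite /d; lra.
have h2 : d = (d / 2) *+ 2 by rewrite -mulr_natr divfK // pnatr_eq0.
have hs : 0 < sin (d / 2) by apply: sin_gt0_pi; apply/andP; split; lra.
move: hc; rewrite h2 cos_mulr2n => hc.
have : cos (d / 2) ^+ 2 = 1 by lra.
move/eqP; rewrite cos2sin2 -subr_eq0 addrAC subrr sub0r oppr_eq0 sqrf_eq0 => /eqP.
by move=> h; move: hs; rewrite h ltxx.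
Qed.

Lemma freq_m (R : realType) (K : nat) (c : 'I_(2 * K)) :
  (freq_index c)%:~R + K%:R = (if (c < K)%N then (c : nat) else (c : nat).+1)%:R :> R.
Proof.
rewrite /freq_index; case: ifP => _.
  by rewrite intrB -[K%:~R]/(K%:R) subrK.
by rewrite intrD intrB -[K%:~R]/(K%:R) -[c%:~R]/(c%:R) addrAC subrK mulrS addrC.
Qed.

Theorem theorem3 (R : realType) (K N : nat) (T : R) (t : nat -> R)
  (hK : (0 < K)%N) (hT : 0 < T)
  (ht0 : forall n : nat, (n < N)%N -> 0 <= t n)
  (htT : forall n : nat, (n < N)%N -> t n < T)
  (hinc : forall n m : nat, (n < m)%N -> (m < N)%N -> t n < t m)
  (hN : (2 * K + 2 <= N)%N) :
  \rank (Bmat K N T t) = (2 * K)%N.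
Proof.
rewrite -mxrank_tr; apply/eqP; change (row_free (Bmat K N T t)^T); rewrite -kermx_eq0; apply/rowV0P => v /sub_kermxP Hv.
apply/rowP => c; rewrite mxE.
pose w := 2 * pi / T.
pose E n (c : 'I_(2 * K)) := expj ((freq_index c)%:~R * w * t n).
pose F n := \sum_c v 0 c * E n c.
have step : forall n, (n < N.-1)%N -> F n.+1 = F n.
  move=> n hn; have := congr1 (fun M : 'M[R[i]]_(1, N.-1) => M 0 (Ordinal hn)) Hv; rewrite !mxE.
  under eq_bigr do rewrite !mxE.
  by rewrite /F /E /w; move/eqP; rewrite (eq_bigr _ (fun i _ => mulrBr _ _ _)) sumrB subr_eq0 => /eqP.
have Fc : forall n, (n < N)%N -> F n = F 0%N.
  elim=> [//|n IH] hn; rewrite step; last by lia.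
  by apply: IH; lia.
pose m (c : 'I_(2 * K)) := if (c < K)%N then (c : nat) else (c : nat).+1.
pose z n := expj (w * t n).
have Ez : forall n c, E n c * z n ^+ K = z n ^+ (m c).
  move=> n c'; rewrite /E /z -!expjMn -expjD -mulrA -mulrDl.
  by rewrite freq_m.
pose p := \sum_c (v 0 c) *: 'X^(m c) - (F 0%N) *: 'X^K : {poly R[i]}.
have coefp : forall j, p`_j = \sum_c v 0 c * (j == m c)%:R - F 0%N * (j == K)%:R.
  move=> j; rewrite coefB coef_sum coefZ coefXn; congr (_ - _).
  by apply: eq_bigr => i _; rewrite coefZ coefXn.
have mK : forall c, m c != K by move=> c'; rewrite /m; case: ifP => h; apply/eqP; lia.
have mle : forall c, (m c <= 2 * K)%N by move=> c'; rewrite /m; case: ifP => h; have := ltn_ord c'; lia.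
have minj : injective m.
  by move=> a b; rewrite /m => h; apply: val_inj => /=; move: h; (do 2 case: ifP) => h1 h2 h; lia.
have sp : (size p <= (2 * K).+1)%N.
  apply/leq_sizeP => j hj; rewrite coefp big1 ?sub0r.
    have hjK : (j == K) = false by apply/negbTE/eqP; lia.
    by rewrite hjK mulr0 oppr0.
  move=> i _; have hji : (j == m i) = false by apply/negbTE/eqP; have := mle i; lia.
  by rewrite hji mulr0.
have p0 : p = 0.
  apply/eqP; apply: contraT => pn0.
  have := max_poly_roots pn0 (rs := [seq z n | n <- iota 0 N]).
  rewrite size_map size_iota.
  have -> : all (root p) [seq z n | n <- iota 0 N].
    apply/allP => x /mapP [n]; rewrite mem_iota add0n => /andP [_ hn] ->.
    rewrite /root /p hornerD hornerN horner_sum hornerZ hornerXn.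
    under eq_bigr do rewrite hornerZ hornerXn.
    rewrite -(Fc n hn) /F mulr_suml subr_eq0; apply/eqP; apply: eq_bigr => i _.
    by rewrite -mulrA Ez.
  have hw : 0 < w by rewrite /w divr_gt0 // mulr_gt0 // pi_gt0.
  have wT : w * T = pi *+ 2 by rewrite /w divfK ?mulr_natl // gt_eqF.
  have -> : uniq [seq z n | n <- iota 0 N].
    rewrite map_inj_in_uniq ?iota_uniq // => a b; rewrite !mem_iota !add0n.
    move=> /andP[_ ha] /andP[_ hb] hab; case: (ltngtP a b) => h //; exfalso.
      have := @expj_inj R (w * t a) (w * t b); rewrite -/(z a) -/(z b) hab eqxx.
      rewrite mulr_ge0 ?(ltW hw) ?ht0 // ltr_pM2l ?hinc // -wT ltr_pM2l ?htT //.
      by move=> /(_ isT isT isT).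
    have := @expj_inj R (w * t b) (w * t a); rewrite -/(z a) -/(z b) hab eqxx.
    rewrite mulr_ge0 ?(ltW hw) ?ht0 // ltr_pM2l ?hinc // -wT ltr_pM2l ?htT //.
    by move=> /(_ isT isT isT).
  move=> /(_ isT isT) h; have := leq_trans h sp; lia.
have := coefp (m c); rewrite p0 coef0 (bigD1 c) //= eqxx mulr1 big1; last first.
  move=> i hi; have hmi : (m c == m i) = false.
    by apply/negbTE; apply: contra hi => /eqP/minj ->.
  by rewrite hmi mulr0.
by rewrite (negbTE (mK c)) mulr0 subr0 addr0 => h; rewrite -h.
Qed.
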